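(* Suppose there exists an (integer) $\mathrm{H}_t(m,n;s,k)$. Let $\alpha_1,\alpha_2,\lambda_1,\lambda_2$ be positive integers with $\alpha_1\le\lambda_2$, $\alpha_2\le\lambda_1$, $\alpha_1\lambda_1=\alpha_2\lambda_2$, $\alpha_1 s\le\lambda_2 n$ and $\alpha_2 k\le\lambda_1 m$. Then there exists an (integer) ${}^{\alpha_1\lambda_1}\mathrm{H}_t(\lambda_1 m,\lambda_2 n;\alpha_1 s,\alpha_2 k)$.
   Context: For positive integers $m,n,s,k,\lambda,t$ with $t$ dividing $\frac{2nk}{\lambda}$, let $v=\frac{2nk}{\lambda}+t$ and $J$ the subgroup of $\mathbb{Z}_v$ of order $t$. A ${}^\lambda\mathrm{H}_t(m,n;s,k)$ is an $m\times n$ partially filled array with entries in $\mathbb{Z}_v$ such that: (a) each row has exactly $s$ and each column exactly $k$ filled cells; (b) the multiset $\{\pm x: x$ an entry of a filled cell$\}$ contains each element of $\mathbb{Z}_v\setminus J$ exactly $\lambda$ times and no element of $J$; (c) every row and every column sums to $0$ in $\mathbb{Z}_v$. For $\lambda=1$ it is written $\mathrm{H}_t(m,n;s,k)$. The array is integer if, representing each entry by its integer representative in $\pm\{1,\dots,\lfloor v/2\rfloor\}$, every row and every column sums to $0$ in $\mathbb{Z}$. *)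

(* Defs.v *)
From mathcomp Require Import all_boot all_algebra.
Set Implicit Arguments. Unset Strict Implicit. Unset Printing Implicit Defensive.

Definition hv (n k lam t : nat) : nat := (2 * n * k) %/ lam + t.

(* an m x n partially filled array with entries in Z_v (represented by 'I_v);
   None = empty cell *)
Definition parray (m n v : nat) := 'I_m -> 'I_n -> option 'I_v.

Section Heffter.
Variables (m n v : nat).
Implicit Types (A : parray m n v).

Definition filled A i j : bool := A i j != None.

Definition val0 (o : option 'I_v) : nat := if o is Some x then val x else 0.

(* number of times y occurs in the multiset {±x : x an entry of a filled cell},
   negation taken mod v *)
Definition pm_count A (y : 'I_v) : nat :=
  \sum_(c : 'I_m * 'I_n)
    (if A c.1 c.2 is Some x then
       ((val x == val y) : nat) + (((v - val x) %% v == val y) : nat)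
     else 0).

(* J = subgroup of Z_v of order t = multiples of v/t *)
Definition inJ (t : nat) (y : 'I_v) : bool := (v %/ t) %| val y.

Definition row_sum A (i : 'I_m) : nat := \sum_(j < n) val0 (A i j).
Definition col_sum A (j : 'I_n) : nat := \sum_(i < m) val0 (A i j).

Definition heffter_conds (s k lam t : nat) A : Prop :=
  [/\ (forall i, #|[pred j | filled A i j]| = s),
      (forall j, #|[pred i | filled A i j]| = k),
      (forall y : 'I_v, pm_count A y = if inJ t y then 0 else lam),
      (forall i, row_sum A i %% v = 0) &
      (forall j, col_sum A j %% v = 0)].

(* integer: representatives in ±{1,...,floor(v/2)} (for x = v/2 either
   sign may be chosen) whose rows and columns sum to 0 in Z *)
Definition is_integer A : Prop :=
  exists f : 'I_m -> 'I_n -> int,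
    [/\ (forall i j, match A i j with
                     | Some x => (f i j == Posz (val x)) || (f i j == (Posz (val x) - Posz v)%R)
                     | None => f i j == 0
                     end),
        (forall i j, filled A i j -> (1 <= absz (f i j) <= v./2)%N),
        (forall i, \sum_(j < n) f i j = 0)%R &
        (forall j, \sum_(i < m) f i j = 0)%R].
End Heffter.

Definition heffter (m n s k lam t : nat) (A : parray m n (hv n k lam t)) : Prop :=
  [/\ [&& 0 < m, 0 < n, 0 < s, 0 < k, 0 < lam & 0 < t]%N,
      lam %| 2 * n * k,
      t %| (2 * n * k) %/ lam &
      heffter_conds s k lam t A].
Arguments heffter m n s k lam t A : clear implicits.

(* Main.v *)
Require Import Defs.
From mathcomp Require Import all_boot all_algebra zify.
Set Implicit Arguments. Unset Strict Implicit. Unset Printing Implicit Defensive.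

Lemma modeq (X r c l2 : nat) : r < l2 -> c < l2 ->
  ((c + (l2 - X %% l2)) %% l2 == r) = ((X + r) %% l2 == c).
Proof.
move=> Hr Hc; have Hl : 0 < l2 by lia.
have HX := ltn_pmod X Hl.
apply/eqP/eqP => E.
- rewrite -modnDml -E modnDmr.
  have -> : X %% l2 + (c + (l2 - X %% l2)) = c + l2 by lia.
  by rewrite modnDr modn_small.
- rewrite -E modnDml.
  have := divn_eq X l2 => HD.
  have -> : X + r + (l2 - X %% l2) = X %/ l2 * l2 + (r + l2) by lia.
  by rewrite modnMDl modnDr modn_small.
Qed.

Lemma card_sum (T : finType) (P : pred T) : #|[pred x | P x]| = \sum_x (P x : nat).
Proof. by rewrite -sum1_card big_mkcond /=; apply: eq_bigr => x _; rewrite inE; case: (P x). Qed.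

Lemma sum_eq1 (N x : nat) : \sum_(r < N) ((x == r) : nat) = (x < N).
Proof.
case: (ltnP x N) => H.
- rewrite (bigD1 (Ordinal H)) //= eqxx big1 ?addn0 // => i /negbTE ne.
  case E: (x == i) => //; move/eqP: E => E.
  have Hi : i = Ordinal H by apply: val_inj; rewrite /= E.
  by rewrite Hi eqxx in ne.
- by rewrite big1 // => i _; rewrite (gtn_eqF (leq_trans (ltn_ord i) H)).
Qed.

Lemma sum_one (N : nat) : \sum_(r < N) 1 = N.
Proof. by rewrite sum1_card card_ord. Qed.

Section Blocks.
Variables (l m : nat) (Hm : 0 < m).
Lemma blk_lt (b : 'I_l) (r : 'I_m) : b * m + r < l * m.
Proof. have := ltn_ord b; have := ltn_ord r; nia. Qed.
Definition blk (b : 'I_l) (r : 'I_m) : 'I_(l * m) := Ordinal (blk_lt b r).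
Lemma div_lt (i : 'I_(l * m)) : i %/ m < l.
Proof. by rewrite ltn_divLR // ltn_ord. Qed.
Definition bidx (i : 'I_(l * m)) : 'I_l := Ordinal (div_lt i).
Definition ridx (i : 'I_(l * m)) : 'I_m := Ordinal (ltn_pmod i Hm).
Lemma bidx_blk b r : bidx (blk b r) = b.
Proof. by apply: val_inj => /=; rewrite divnMDl // divn_small // addn0. Qed.
Lemma ridx_blk b r : ridx (blk b r) = r.
Proof. by apply: val_inj => /=; rewrite modnMDl modn_small. Qed.
Lemma bidxK i : blk (bidx i) (ridx i) = i.
Proof. by apply: val_inj => /=; rewrite -divn_eq. Qed.
Lemma sum_blk (R : Type) (idx : R) (op : Monoid.com_law idx) (F : 'I_(l * m) -> R) :
  \big[op/idx]_(i < l * m) F i = \big[op/idx]_(b < l) \big[op/idx]_(r < m) F (blk b r).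
Proof.
rewrite pair_big /= (reindex (fun p : 'I_l * 'I_m => blk p.1 p.2)) //.
apply: onW_bij; exists (fun i => (bidx i, ridx i)) => [[b r] | i] /=.
  by rewrite bidx_blk ridx_blk.
exact: bidxK.
Qed.
End Blocks.

Definition sel (l2 a1 b c : nat) : bool := (c + (l2 - (b * a1) %% l2)) %% l2 < a1.

Lemma sel_row l2 a1 b : 0 < l2 -> a1 <= l2 -> \sum_(c < l2) (sel l2 a1 b c : nat) = a1.
Proof.
move=> Hl Ha.
under eq_bigr do rewrite /sel -sum_eq1.
rewrite exchange_big /= -[RHS]sum_one; apply: eq_bigr => r _.
under eq_bigr => c _ do rewrite modeq ?(leq_trans (ltn_ord r) Ha) ?ltn_ord //.
by rewrite sum_eq1 ltn_pmod.
Qed.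

Lemma sel_col l1 l2 a1 a2 c : 0 < l2 -> 0 < a1 -> a1 <= l2 -> a1 * l1 = a2 * l2 -> c < l2 ->
  \sum_(b < l1) (sel l2 a1 b c : nat) = a2.
Proof.
move=> Hl Ha1 Ha Heq Hc.
under eq_bigr do rewrite /sel -sum_eq1.
transitivity (\sum_(x < l1 * a1) ((x %% l2 == c) : nat)).
  rewrite (sum_blk Ha1); apply: eq_bigr => b _; apply: eq_bigr => r _.
  by rewrite modeq ?(leq_trans (ltn_ord r) Ha).
rewrite mulnC Heq (sum_blk Hl) -[RHS]sum_one; apply: eq_bigr => q _.
under eq_bigr => r _ do rewrite /= modnMDl modn_small // eq_sym.
by rewrite sum_eq1 Hc.
Qed.

Section Construction.
Variables (v m n a1 l2 l1 : nat) (Hm : 0 < m) (Hn : 0 < n).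
Variable A : parray m n v.

Definition Bc : parray (l1 * m) (l2 * n) v := fun i j =>
  if sel l2 a1 (bidx Hm i) (bidx Hn j) then A (ridx Hm i) (ridx Hn j) else None.

Lemma Bc_row (G : option 'I_v -> nat) (G0 : G None = 0) i :
  \sum_(j < l2 * n) G (Bc i j) =
  (\sum_(c < l2) (sel l2 a1 (bidx Hm i) c : nat)) * \sum_(q < n) G (A (ridx Hm i) q).
Proof.
rewrite (sum_blk Hn) big_distrl /=; apply: eq_bigr => c _.
under eq_bigr => q _ do rewrite /Bc bidx_blk ridx_blk.
by case: sel; rewrite ?mul1n // mul0n big1.
Qed.

Lemma Bc_col (G : option 'I_v -> nat) (G0 : G None = 0) j :
  \sum_(i < l1 * m) G (Bc i j) =
  (\sum_(b < l1) (sel l2 a1 b (bidx Hn j) : nat)) * \sum_(r < m) G (A r (ridx Hn j)).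
Proof.
rewrite (sum_blk Hm) big_distrl /=; apply: eq_bigr => b _.
under eq_bigr => q _ do rewrite /Bc bidx_blk ridx_blk.
by case: sel; rewrite ?mul1n // mul0n big1.
Qed.

Lemma Bc_full (G : option 'I_v -> nat) (G0 : G None = 0) :
  \sum_(i < l1 * m) \sum_(j < l2 * n) G (Bc i j) =
  (\sum_(b < l1) \sum_(c < l2) (sel l2 a1 b c : nat)) * \sum_(r < m) \sum_(q < n) G (A r q).
Proof.
rewrite (sum_blk Hm) big_distrl /=; apply: eq_bigr => b _.
rewrite big_distrr /=; apply: eq_bigr => r _.
by rewrite Bc_row // bidx_blk ridx_blk.
Qed.

End Construction.

Lemma construct (v m n s k t a1 a2 l1 l2 : nat) (Hm : 0 < m) (Hn : 0 < n) (A : parray m n v) :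
  0 < a1 -> 0 < l2 -> a1 <= l2 -> a1 * l1 = a2 * l2 ->
  heffter_conds s k 1 t A -> heffter_conds (a1 * s) (a2 * k) (a1 * l1) t (@Bc v m n a1 l2 l1 Hm Hn A).
Proof.
move=> Ha1 Hl2 Ha Heq [Hr Hc Hp Hrs Hcs]; split.
- move=> i; rewrite card_sum /filled.
  have := @Bc_row v m n a1 l2 l1 Hm Hn A (fun o => (o != None : nat)) erefl i => /= ->.
  rewrite sel_row // -(Hr (ridx Hm i)) card_sum; congr (_ * _).
- move=> j; rewrite card_sum /filled.
  have := @Bc_col v m n a1 l2 l1 Hm Hn A (fun o => (o != None : nat)) erefl j => /= ->.
  rewrite (@sel_col l1 l2 a1 a2 _ Hl2 Ha1 Ha Heq) ?(div_lt Hn j) // -(Hc (ridx Hn j)) card_sum; congr (_ * _).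
- move=> y.
  pose G := fun o : option 'I_v => if o is Some x then
       ((val x == val y) : nat) + (((v - val x) %% v == val y) : nat) else 0.
  have E : forall M N (X : parray M N v), pm_count X y = \sum_(i < M) \sum_(j < N) G (X i j).
    by move=> M N X; rewrite pair_bigA.
  rewrite E (@Bc_full v m n a1 l2 l1 Hm Hn A G erefl) -E Hp.
  under eq_bigr => b _ do rewrite sel_row //.
  rewrite sum_nat_const card_ord /=.
  by case: inJ; rewrite ?muln0 // muln1 mulnC.
- move=> i; have := @Bc_row v m n a1 l2 l1 Hm Hn A (@val0 v) erefl i; rewrite /row_sum => ->.
  apply/eqP; rewrite -/(dvdn _ _); apply: dvdn_mull; apply/eqP; exact: Hrs.
- move=> j; have := @Bc_col v m n a1 l2 l1 Hm Hn A (@val0 v) erefl j; rewrite /col_sum => ->.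
  apply/eqP; rewrite -/(dvdn _ _); apply: dvdn_mull; apply/eqP; exact: Hcs.
Qed.

Lemma construct_int (v m n a1 l1 l2 : nat) (Hm : 0 < m) (Hn : 0 < n) (A : parray m n v) :
  is_integer A -> is_integer (@Bc v m n a1 l2 l1 Hm Hn A).
Proof.
case=> f [H1 H2 H3 H4].
exists (fun i j => if sel l2 a1 (bidx Hm i) (bidx Hn j) then f (ridx Hm i) (ridx Hn j) else 0%R).
split.
- by move=> i j; rewrite /Bc; case: sel => //; apply: H1.
- by move=> i j; rewrite /filled /Bc; case: sel => //; apply: H2.
- move=> i; rewrite (sum_blk Hn) big1 // => c _.
  under eq_bigr => q _ do rewrite bidx_blk ridx_blk.
  by case: sel; [apply: H3 | rewrite big1].
- move=> j; rewrite (sum_blk Hm) big1 // => b _.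
  under eq_bigr => r _ do rewrite bidx_blk ridx_blk.
  by case: sel; [apply: H4 | rewrite big1].
Qed.

Theorem proposition4 (m n s k t a1 a2 l1 l2 : nat) :
  (0 < a1)%N -> (0 < a2)%N -> (0 < l1)%N -> (0 < l2)%N ->
  (a1 <= l2)%N -> (a2 <= l1)%N -> a1 * l1 = a2 * l2 ->
  (a1 * s <= l2 * n)%N -> (a2 * k <= l1 * m)%N ->
  ((exists A : parray m n (hv n k 1 t), heffter m n s k 1 t A) ->
     exists B : parray (l1 * m) (l2 * n) (hv (l2 * n) (a2 * k) (a1 * l1) t),
       heffter (l1 * m) (l2 * n) (a1 * s) (a2 * k) (a1 * l1) t B)
  /\
  ((exists A : parray m n (hv n k 1 t), heffter m n s k 1 t A /\ is_integer A) ->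
     exists B : parray (l1 * m) (l2 * n) (hv (l2 * n) (a2 * k) (a1 * l1) t),
       heffter (l1 * m) (l2 * n) (a1 * s) (a2 * k) (a1 * l1) t B /\ is_integer B).
Proof.
move=> Ha1 Ha2 Hl1 Hl2 Ha Hb Heq _ _.
have E : 2 * (l2 * n) * (a2 * k) = 2 * n * k * (a1 * l1) by rewrite Heq; nia.
have Hal : 0 < a1 * l1 by rewrite muln_gt0 Ha1.
have Hv : hv (l2 * n) (a2 * k) (a1 * l1) t = hv n k 1 t by rewrite /hv divn1 E mulnK.
split => [[A HA] | [A [HA HI]]]; case: HA => Hpos Hd1 Hd2 Hc;
  move: (Hpos) => /andP [Hm /and5P [Hn Hs Hk _ Ht]]; rewrite /heffter Hv;
  [exists (@Bc _ m n a1 l2 l1 Hm Hn A) | exists (@Bc _ m n a1 l2 l1 Hm Hn A); split; last exact: construct_int];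
  (split; [ by rewrite !muln_gt0 Hm Hn Hs Hk Ha1 Ha2 Hl1 Hl2 Ht
          | by rewrite E dvdn_mull
          | by rewrite E mulnK // -(divn1 (2 * n * k))
          | exact: construct ]).
Qed.
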